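(* Fix $s\in\mathbb{N}^+$. If $m$ is sufficiently large (depending on $s$), then for every graph $G$, all positive integers $r_1,\dots,r_s$, every $i\in[s]$ and every homomorphism $\varphi$ from $F_i^{\bullet\bullet}$ (viewed as an ordinary digraph) to $T_G^\bigstar$, there is a single pair $(j,k)$ with $j\in[s]$, $k\in[r_j]$ such that $\varphi(V(F_i^{\bullet\bullet}))\subseteq V(T_{j*k})$.
   Context: All digraphs are finite and loopless; a tournament is a digraph in which every pair of distinct vertices is joined by exactly one arc. A homomorphism from a digraph $F$ to a digraph $H$ is a map $\varphi:V(F)\to V(H)$ with $(\varphi(u),\varphi(v))\in E(H)$ whenever $(u,v)\in E(F)$. Construction of $F_i^{\bullet\bullet}$: fix $s$, a positive integer $m$, and a tournament $F_0$ on vertex set $[m]$ satisfying: (I) every vertex has out-degree and in-degree at most $2m/3$; (II) there are no disjoint $A_1,A_2\subseteq[m]$ with $|A_1|=|A_2|=\lceil\sqrt m\,\rceil$ such that $(a_1,a_2)$ is an arc for all $a_1\in A_1,a_2\in A_2$; (III) for every $S\subseteq[m]$ with $|S|\ge 2m/13-\sqrt m$, $F_0[S]$ contains a directed cycle. Let $k_1,\dots,k_s$ be integers in $(2m/3+2,\,5m/6)$ with $k_i>k_{i+1}+1$. $F_i^{\bullet\bullet}$ is the digraph on $[m]\cup\{z_i,w_i\}$ (roots $z_i,w_i$) whose arcs are the arcs of $F_0$, plus $z_i\to v$, $v\to w_i$ for $1\le v\le k_i$, plus $u\to z_i$, $w_i\to u$ for $k_i<u\le m$. The symmetrization $F_i^{\dagger\bullet\bullet}$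 is obtained from two disjoint copies of $F_i^{\bullet\bullet}$, the ''left'' copy with roots $z^1,w^1$ and the ''right'' copy with roots $z^2,w^2$, by identifying $z^1$ with $w^2$ (root $z_i$) and $w^1$ with $z^2$ (root $w_i$). Construction of $T_G^\bigstar$: let $G$ be a graph on $[n]$ and $r_1,\dots,r_s\in\mathbb{N}^+$. For $i\in[s]$ the tournament $T_i$ is built as follows. (1) $T_0$ is the transitive tournament on $[n]$ with arcs $a\to b$ for $a<b$; $T_0[G]$ is its sub-digraph with arcs $(a,b)$, $a<b$, $ab\in E(G)$. Order the arcs of $T_0[G]$ by $(x,y)\succ(a,b)$ iff $x+y>a+b$, or $x+y=a+b$ and $x>a$. (2) For each arc $e=(a,b)$ of $T_0[G]$ attach a new copy of $F_i^{\dagger\bullet\bullet}$ with root $z_i$ identified with $a$ and root $w_i$ with $b$ (so in the left copy $\overleftarrow{F_i^e}$ the roots $z,w$ are $a,b$, and in the right copy $\overrightarrow{F_i^e}$ they are $b,a$). Let $V_e$ be the $2m$ non-root vertices of this copy and $V_0=\bigcup_e V_e$. (3) Add all arcs $x\to y$ with $x$ a non-root vertex of $\overleftarrow{F_i^e}$ and $y$ a non-root vertex of $\overrightarrow{F_i^e}$. (4) For each arc $e=(a,b)$ of $T_0[G]$ and each $x\in[n]\setminus\{a,b\}$, add arcs $x\to v$ for all $v\in V_e$. (5) For arcs $e_1\succ e_2$ of $T_0[G]$, add all arcs $x\to y$ with $x\in V_{e_1}$, $y\in V_{e_2}$. Then $T_G^\bigstar$ is the tournament formed by disjoint copies $T_{i*k}$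 of $T_i$ for $i\in[s]$, $k\in[r_i]$, with all arcs $u\to v$ for $u\in V(T_{i_1*k_1})$, $v\in V(T_{i_2*k_2})$ whenever $i_1<i_2$, or $i_1=i_2$ and $k_1<k_2$. The base of $T_{i*k}$ is its copy of $T_0$, and $T_{i*k}[G]$ denotes the copy of $T_0[G]$ in it. *)

(* Defs.v *)
From mathcomp Require Import all_boot all_order.
Set Implicit Arguments. Unset Strict Implicit. Unset Printing Implicit Defensive.

(* Conventions: the vertex set [m] = {1..m} of F_0 is represented by 'I_m,
   with the ordinal v standing for the vertex v+1.  Likewise [n] = 'I_n and
   [s] = 'I_s, [r_j] = {k | k < r j}.  All index shifts are order-preserving. *)

Definition is_tournament (T : finType) (F : rel T) : Prop :=
  (forall x, ~~ F x x) /\ (forall x y, x != y -> F x y = ~~ F y x).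

(* ceil(sqrt m) = least c with m <= c^2 (such c lies in 0..m). *)
Definition ceil_sqrt (m : nat) : nat := find (fun c => m <= c * c) (iota 0 m.+1).

Definition has_dicycle (T : finType) (F : rel T) (S : {set T}) : Prop :=
  exists c : seq T, [/\ 1 < size c, uniq c, {subset c <= S} & cycle F c].

(* |S| >= 2m/13 - sqrt m, written exactly in nat arithmetic:
   either 2m <= 13|S|, or (2m - 13|S|)^2 <= 169 m. *)
Definition big_enough (m c : nat) : Prop :=
  2 * m <= 13 * c \/ (2 * m - 13 * c) ^ 2 <= 169 * m.

(* Conditions (I), (II), (III) on the tournament F_0 on [m]. *)
Definition F0_cond (m : nat) (F0 : rel 'I_m) : Prop :=
  [/\ is_tournament F0,
      (forall x, 3 * #|[set y | F0 x y]| <= 2 * m /\ 3 * #|[set y | F0 y x]| <= 2 * m),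
      ~ (exists A1 A2 : {set 'I_m},
            [/\ [disjoint A1 & A2], #|A1| = ceil_sqrt m, #|A2| = ceil_sqrt m
              & forall a1 a2, a1 \in A1 -> a2 \in A2 -> F0 a1 a2])
    & forall S : {set 'I_m}, big_enough m #|S| -> has_dicycle F0 S].

Definition k_cond (m s : nat) (kk : 'I_s -> nat) : Prop :=
  (forall i, 2 * m + 6 < 3 * kk i /\ 6 * kk i < 5 * m) /\
  (forall i j : 'I_s, nat_of_ord j = (nat_of_ord i).+1 -> (kk j).+1 < kk i).

(* F_i^{bullet bullet}: vertices inl v (v in [m]), inr false = z_i, inr true = w_i. *)
Definition VF (m : nat) := ('I_m + bool)%type.

Definition Fbb_arc (m : nat) (F0 : rel 'I_m) (k : nat) (x y : VF m) : bool :=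
  match x, y with
  | inl u, inl v => F0 u v
  | inr false, inl v => v < k        (* z -> v, v <= k_i *)
  | inl v, inr false => k <= v       (* u -> z, u > k_i *)
  | inl v, inr true => v < k         (* v -> w, v <= k_i *)
  | inr true, inl v => k <= v        (* w -> u, u > k_i *)
  | inr _, inr _ => false
  end.

Definition Gedge (n : nat) (G : rel 'I_n) :=
  {e : 'I_n * 'I_n | (e.1 < e.2) && G e.1 e.2}.

Definition edge_succ (n : nat) (G : rel 'I_n) (e1 e2 : Gedge G) : bool :=
  let x := nat_of_ord (val e1).1 in let y := nat_of_ord (val e1).2 in
  let a := nat_of_ord (val e2).1 in let b := nat_of_ord (val e2).2 in
  (a + b < x + y) || ((x + y == a + b) && (a < x)).

(* Vertices of T_i: base vertices inl a, and non-root vertices inr (e, c, v) of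
   the copy of F_i^{dagger bullet bullet} attached to e: c = false is the left
   copy (roots z = a, w = b), c = true the right copy (roots z = b, w = a);
   v in [m] is a non-root vertex of that copy. *)
Definition VT (n : nat) (G : rel 'I_n) (m : nat) :=
  ('I_n + (Gedge G * bool * 'I_m))%type.

Definition rootz (n : nat) (G : rel 'I_n) (e : Gedge G) (c : bool) : 'I_n :=
  if c then (val e).2 else (val e).1.
Definition rootw (n : nat) (G : rel 'I_n) (e : Gedge G) (c : bool) : 'I_n :=
  if c then (val e).1 else (val e).2.

Definition Ti_arc (n : nat) (G : rel 'I_n) (m : nat) (F0 : rel 'I_m) (k : nat)
    (x y : VT G m) : bool :=
  match x, y with
  | inl a, inl b => a < b
  | inl a, inr (e, c, v) =>
      if a == rootz e c then v < k else if a == rootw e c then k <= v else true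
  | inr (e, c, v), inl a =>
      if a == rootz e c then k <= v else if a == rootw e c then v < k else false
  | inr (e1, c1, v1), inr (e2, c2, v2) =>
      if e1 == e2 then (if c1 == c2 then F0 v1 v2 else ~~ c1 && c2)
      else edge_succ e1 e2
  end.

Definition Idx (s : nat) (r : 'I_s -> nat) := {p : 'I_s * nat | p.2 < r p.1}.

(* Vertices of T_G^star: (copy index (j,k), vertex of T_{j*k}). *)
Definition VS (s : nat) (r : 'I_s -> nat) (n : nat) (G : rel 'I_n) (m : nat) :=
  (Idx r * VT G m)%type.

Definition Tstar_arc (s : nat) (r : 'I_s -> nat) (n : nat) (G : rel 'I_n)
    (m : nat) (F0 : rel 'I_m) (kk : 'I_s -> nat) (x y : VS r G m) : bool :=
  let i1 := (val x.1).1 in let k1 := (val x.1).2 in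
  let i2 := (val y.1).1 in let k2 := (val y.1).2 in
  (i1 < i2) || ((i1 == i2) && (k1 < k2)) ||
  ((x.1 == y.1) && Ti_arc F0 (kk i1) x.2 y.2).

(* Main.v *)
Require Import Defs.
From mathcomp Require Import all_boot all_order.
From mathcomp Require Import zify.
Set Implicit Arguments. Unset Strict Implicit.

Section Helpers.
Variables (s : nat) (r : 'I_s -> nat).
Definition NN := \max_(j : 'I_s) r j.
Definition key (p : Idx r) : nat := (val p).1 * NN + (val p).2.

Lemma key2lt (p : Idx r) : (val p).2 < NN.
Proof. exact: leq_trans (valP p) (leq_bigmax _). Qed.

Lemma key_lt (p q : Idx r) : ((val p).1 < (val q).1)%N -> key p < key q.
Proof.
move=> h; have hp := key2lt p; rewrite /key.
set a := nat_of_ord (val p).1 in h *; set b := nat_of_ord (val q).1 in h *.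
have : a.+1 * NN <= b * NN by rewrite leq_mul2r h orbT.
rewrite mulSn; lia.
Qed.

Lemma key_inj (p q : Idx r) : key p = key q -> p = q.
Proof.
move=> e; case: (ltngtP (val p).1 (val q).1) => h.
- by have := key_lt h; rewrite e ltnn.
- by have := key_lt h; rewrite e ltnn.
- have h1 : (val p).1 = (val q).1 by apply: val_inj.
  move: e; rewrite /key h => e.
  have h2 : (val p).2 = (val q).2 by lia.
  apply: val_inj; rewrite [val p]surjective_pairing [val q]surjective_pairing.
  by rewrite h1 h2.
Qed.
End Helpers.

Lemma arc_mono s (r : 'I_s -> nat) n (G : rel 'I_n) m (F0 : rel 'I_m) kk
  (X Y : VS r G m) : Tstar_arc F0 kk X Y -> key X.1 <= key Y.1.
Proof.
rewrite /Tstar_arc => /orP [/orP [h | /andP [/eqP h1 h2]] | /andP [/eqP h _]].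
- exact: ltnW (key_lt h).
- rewrite /key; have -> : nat_of_ord (val X.1).1 = nat_of_ord (val Y.1).1 by rewrite h1.
  by rewrite leq_add2l ltnW.
- by rewrite h.
Qed.

Lemma sub_card (T : finType) (A : {set T}) c : c <= #|A| ->
  exists B : {set T}, B \subset A /\ #|B| = c.
Proof.
move=> h; exists [set x in take c (enum A)]; split.
- apply/subsetP => x; rewrite inE => /mem_take; by rewrite mem_enum.
- rewrite cardsE (card_uniqP _); last by apply: take_uniq; apply: enum_uniq.
  by rewrite size_take -cardE; case: ltngtP h => // ->.
Qed.

Lemma ceil_sqrt_le m c : c <= m -> m <= c * c -> ceil_sqrt m <= c.
Proof.
move=> h1 h2; rewrite /ceil_sqrt; case: leqP => // h.
have := before_find 0 h; rewrite nth_iota ?add0n ?h2 //; lia.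
Qed.

Theorem lemma4p7 (s : nat) : 0 < s ->
  exists M : nat, forall m : nat, M <= m ->
  forall (F0 : rel 'I_m) (kk : 'I_s -> nat), F0_cond F0 -> k_cond m kk ->
  forall (n : nat) (G : rel 'I_n), irreflexive G -> symmetric G ->
  forall r : 'I_s -> nat, (forall j, 0 < r j) ->
  forall (i : 'I_s) (phi : VF m -> VS r G m),
    (forall x y, Fbb_arc F0 (kk i) x y -> Tstar_arc F0 kk (phi x) (phi y)) ->
    exists p : Idx r, forall x, (phi x).1 = p.
Proof.
move=> _; exists 12 => m Hm F0 kk [Htour Hdeg HII HIII] [Hk _] n G _ _ r _ i phi Hhom.
have [Hk1 Hk2] := Hk i.
set k := kk i in Hk1 Hk2 Hhom.
pose f x := key (phi x).1.
have mono : forall x y, Fbb_arc F0 k x y -> f x <= f y.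
  by move=> x y /Hhom /arc_mono.
case: (@arg_minnP _ (inr false : VF m) predT f erefl) => x0 _ Hmin.
have clos : forall x y, Fbb_arc F0 k x y -> f y = f x0 -> f x = f x0.
  move=> x y /mono h e; apply/eqP; rewrite eqn_leq Hmin // andbT; by rewrite -e.
exists (phi x0).1 => x; apply: key_inj; rewrite -/(f x) -/(f x0).
case: (eqVneq (f x) (f x0)) => // Hne; exfalso.
have m0 : 0 < m by lia.
have km : k < m by lia.
pose o0 := Ordinal m0; pose ok := Ordinal km.
have k0 : 0 < k by lia.
pose A0 := [set v : 'I_m | f (inl v) == f x0].
have hA : exists a, a \in A0.
  case Ex0 : x0 => [v|[|]].
  - by exists v; rewrite inE -Ex0.
  - exists o0; rewrite inE; apply/eqP; apply: (clos _ (inr true)); last by rewrite Ex0.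
    by rewrite /= k0.
  - exists ok; rewrite inE; apply/eqP; apply: (clos _ (inr false)); last by rewrite Ex0.
    by rewrite /= leqnn.
have hB : exists b, b \notin A0.
  case: x Hne => [v|[|]] Hne.
  - by exists v; rewrite inE.
  - exists ok; rewrite inE; apply/eqP => e; move/eqP: Hne; apply.
    by apply: (clos _ (inl ok)); rewrite //= leqnn.
  - exists o0; rewrite inE; apply/eqP => e; move/eqP: Hne; apply.
    by apply: (clos _ (inl o0)) => //=.
have cross : forall a b, a \in A0 -> b \notin A0 -> F0 a b.
  move=> a b ha hb; have ab : a != b by apply/eqP => e; move: hb; rewrite -e ha.
  rewrite (proj2 Htour a b ab); apply/negP => hba; move: hb; rewrite inE.
  move: ha; rewrite inE => /eqP ha.
  by rewrite (clos (inl b) (inl a) hba ha) eqxx.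
have [a ha] := hA; have [b hb] := hB.
have c1 : #|~: A0| <= #|[set y | F0 a y]|.
  apply: subset_leq_card; apply/subsetP => y; rewrite !inE => hy.
  by apply: cross => //; rewrite inE.
have c2 : #|A0| <= #|[set y | F0 y b]|.
  apply: subset_leq_card; apply/subsetP => y hy; rewrite !inE.
  exact: cross.
have [d1 _] := Hdeg a; have [_ d2] := Hdeg b.
have cc := cardsC A0; rewrite card_ord in cc.
have hc : ceil_sqrt m <= m %/ 3.
  have q4 : 4 <= m %/ 3 by lia.
  have : 4 * (m %/ 3) <= m %/ 3 * (m %/ 3) by rewrite leq_mul2r q4 orbT.
  move=> hq; apply: ceil_sqrt_le; lia.
have [A1 [s1 e1]] : exists A1 : {set 'I_m}, A1 \subset A0 /\ #|A1| = ceil_sqrt m.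
  have hA0 : m %/ 3 <= #|A0| by lia.
  apply: sub_card; exact: leq_trans hc hA0.
have [A2 [s2 e2]] : exists A2 : {set 'I_m}, A2 \subset ~: A0 /\ #|A2| = ceil_sqrt m.
  have hB0 : m %/ 3 <= #|~: A0| by lia.
  apply: sub_card; exact: leq_trans hc hB0.
apply: HII; exists A1, A2; split => //.
- rewrite -setI_eq0; apply/eqP/setP => y; rewrite !inE.
  apply/negP => /andP [y1 y2].
  by move: (subsetP s1 _ y1) (subsetP s2 _ y2); rewrite !inE => ->.
- move=> a1 a2 h1 h2; apply: cross; first exact: (subsetP s1).
  by move: (subsetP s2 _ h2); rewrite inE.
Qed.
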